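(* Consider the two-player game described in the context, with initial state $\mathbf{x}=(x,y)$. An equilibrium (Nash) pair of policies is $$(\psi_{\rm NE},T_{\rm NE})=\Big(\cos^{-1}\mu,\ \max\Big\{x-\tfrac{\mu}{\sqrt{1-\mu^2}}\,y,\ 0\Big\}\Big),$$ where $\psi_{\rm NE}$ means the Evader holds the constant heading $\cos^{-1}\mu$.
   Context: Pursuer-fixed frame: the Evader's relative position $\mathbf{x}(t)=(x(t),y(t))\in\mathbb{R}^2$ evolves as $\dot x=\mu\cos\psi(t)-1$, $\dot y=\mu\sin\psi(t)$, with $\mu\in(0,1)$. Game: the Evader chooses its heading trajectory $\psi(\cdot)$ subject to the constraint $\|\mathbf{x}(t)\|\ge1$ on $[0,T]$, and the Pursuer chooses the final time $T\ge0$; the payoff is the final distance $\|\mathbf{x}(T)\|$, which the Evader maximizes and the Pursuer minimizes. An equilibrium pair is one from which neither player benefits by unilateral deviation. The paper assumes $y\ge0$ throughout. *)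

(* Defs.v *)
From HB Require Import structures.
From mathcomp Require Import all_boot all_order all_algebra.
From mathcomp Require Import all_classical all_reals all_analysis.
Set Implicit Arguments. Unset Strict Implicit. Unset Printing Implicit Defensive.
Import Order.TTheory GRing.Theory Num.Theory.
Import numFieldNormedType.Exports.
Local Open Scope classical_set_scope.
Local Open Scope ring_scope.

Section Game.
Context {R : realType}.

(* Evader's relative position under heading psi (Caratheodory solution of
   xdot = mu cos psi - 1, ydot = mu sin psi, with x(0) = x0, y(0) = y0). *)
Definition traj_x (mu x0 : R) (psi : R -> R) (t : R) : R :=
  x0 + \int[lebesgue_measure]_(s in `[0, t]) (mu * cos (psi s) - 1).
Definition traj_y (mu y0 : R) (psi : R -> R) (t : R) : R :=
  y0 + \int[lebesgue_measure]_(s in `[0, t]) (mu * sin (psi s)).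

Definition dist_at (mu x0 y0 : R) (psi : R -> R) (t : R) : R :=
  Num.sqrt (traj_x mu x0 psi t ^+ 2 + traj_y mu y0 psi t ^+ 2).

Definition admissible (mu x0 y0 : R) (psi : R -> R) (T : R) : Prop :=
  0 <= T /\ measurable_fun setT psi /\
  (forall t, 0 <= t <= T -> 1 <= dist_at mu x0 y0 psi t).

(* Nash equilibrium: the pair is feasible, the Evader (maximizer) cannot
   increase the payoff by changing psi, the Pursuer (minimizer) cannot
   decrease it by changing T. *)
Definition is_equilibrium (mu x0 y0 : R) (psi : R -> R) (T : R) : Prop :=
  admissible mu x0 y0 psi T /\
  (forall psi', admissible mu x0 y0 psi' T ->
     dist_at mu x0 y0 psi' T <= dist_at mu x0 y0 psi T) /\
  (forall T', admissible mu x0 y0 psi T' ->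
     dist_at mu x0 y0 psi T <= dist_at mu x0 y0 psi T').

Definition psi_NE (mu : R) : R -> R := fun _ => acos mu.
Definition T_NE (mu x0 y0 : R) : R :=
  Num.max (x0 - mu / Num.sqrt (1 - mu ^+ 2) * y0) 0.

End Game.

(* Main.v *)
Require Import Defs.
From HB Require Import structures.
From mathcomp Require Import all_boot all_order all_algebra.
From mathcomp Require Import all_classical all_reals all_analysis.
From mathcomp Require Import measurable_realfun.
From mathcomp Require Import ring lra.
Import Order.TTheory GRing.Theory Num.Theory.
Import numFieldNormedType.Exports.
Local Open Scope classical_set_scope.
Local Open Scope ring_scope.

Section S.
Context {R : realType}.
Notation leb := (@lebesgue_measure R).

Lemma meas_itv {t : R} : 0 <= t -> leb `[0, t] = t%:E.
Proof.
move=> t0; rewrite lebesgue_measure_itv /= lte_fin.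
case: ltP => [_|tle]; first by rewrite oppr0 adde0.
by have -> : t = 0 by apply/le_anti; rewrite t0 tle.
Qed.

Lemma int_comp (g : R -> R) (psi : R -> R) (t M : R) :
  continuous g -> (forall x, `|g x| <= M) -> measurable_fun setT psi -> 0 <= t ->
  leb.-integrable `[0, t] (EFin \o (fun s => g (psi s))).
Proof.
move=> cg gb mpsi t0.
apply: measurable_bounded_integrable => //.
- exact: (eq_ind_r (fun z => (z < +oo)%E) (ltry t) (meas_itv t0)).
- apply: measurable_funS (measurableT_comp (continuous_measurable_fun cg) mpsi) => //.
- exists M; split; first exact: num_real. move=> N N1 x _ /=; exact: le_trans (gb _) (ltW N1).
Qed.

Lemma int_cst (t c : R) : 0 <= t -> \int[leb]_(s in `[0, t]) c = c * t.
Proof.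
move=> t0; rewrite Rintegral_cst //.
by have -> : fine (leb `[0, t]) = t by rewrite (meas_itv t0).
Qed.

Lemma cs_bound (a b x : R) : a * cos x + b * sin x <= Num.sqrt (a ^+ 2 + b ^+ 2).
Proof.
apply: le_trans (ler_norm _) _.
rewrite -sqrtr_sqr; apply: ler_wsqrtr.
have h := cos2Dsin2 x.
have h2 := sqr_ge0 (a * sin x - b * cos x).
nra.
Qed.

Lemma key (psi : R -> R) (t : R) : measurable_fun setT psi -> 0 <= t ->
  (\int[leb]_(s in `[0, t]) cos (psi s)) ^+ 2 +
  (\int[leb]_(s in `[0, t]) sin (psi s)) ^+ 2 <= t ^+ 2.
Proof.
move=> mpsi t0.
set a := \int[leb]_(s in `[0, t]) cos (psi s).
set b := \int[leb]_(s in `[0, t]) sin (psi s).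
have ic : leb.-integrable `[0, t] (EFin \o (fun s => a * cos (psi s))).
  apply: (@int_comp (fun x => a * cos x) _ _ `|a|) => //.
    by move=> x; apply: cvgM; [exact: cvg_cst | exact: continuous_cos].
  by move=> x; rewrite normrM ler_piMr // cos_max.
have is_ : leb.-integrable `[0, t] (EFin \o (fun s => b * sin (psi s))).
  apply: (@int_comp (fun x => b * sin x) _ _ `|b|) => //.
    by move=> x; apply: cvgM; [exact: cvg_cst | exact: continuous_sin].
  by move=> x; rewrite normrM ler_piMr // sin_max.
have ic1 : leb.-integrable `[0, t] (EFin \o (fun s => cos (psi s))).
  by apply: (@int_comp cos _ _ 1) => //; [exact: continuous_cos | exact: cos_max].
have is1 : leb.-integrable `[0, t] (EFin \o (fun s => sin (psi s))).
  by apply: (@int_comp sin _ _ 1) => //; [exact: continuous_sin | exact: sin_max].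
have E : a ^+ 2 + b ^+ 2 = \int[leb]_(s in `[0, t]) (a * cos (psi s) + b * sin (psi s)).
  rewrite RintegralD // RintegralZl // RintegralZl //.
set r := Num.sqrt (a ^+ 2 + b ^+ 2).
have cc : continuous (fun _ : R => r) by move=> x; exact: cvg_cst.
have L : a ^+ 2 + b ^+ 2 <= r * t.
  rewrite {1}E -int_cst //; apply: le_Rintegral => //.
    apply: (@int_comp (fun x => a * cos x + b * sin x) _ _ (`|a| + `|b|)) => //.
      move=> x; apply: cvgD; (apply: cvgM; [exact: cvg_cst | ]).
        exact: continuous_cos.
      exact: continuous_sin.
    move=> x; apply: le_trans (ler_normD _ _) _; apply: lerD;
      rewrite normrM ler_piMr //; [exact: cos_max | exact: sin_max].
    have hc := @int_comp (fun _ => r) id t `|r| cc (fun x => lexx _) (@measurable_id _ _ _) t0.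
    exact hc.
  by move=> x _; exact: cs_bound.
have r0 : 0 <= r by exact: sqrtr_ge0.
have rr : r ^+ 2 = a ^+ 2 + b ^+ 2 by rewrite sqr_sqrtr // addr_ge0 // sqr_ge0.
rewrite -rr in L *.
nra.
Qed.

Lemma int_const (t c : R) : 0 <= t ->
  leb.-integrable `[0, t] (EFin \o (fun _ : R => c)).
Proof.
move=> t0.
have cc : continuous (fun _ : R => c) by move=> x; exact: cvg_cst.
have hc := @int_comp (fun _ => c) id t `|c| cc (fun x => lexx _) (@measurable_id _ _ _) t0.
exact hc.
Qed.

Lemma trajx_eq (m x0 : R) psi t : measurable_fun setT psi -> 0 <= t ->
  traj_x m x0 psi t = x0 + m * \int[leb]_(s in `[0, t]) cos (psi s) - t.
Proof.
move=> mpsi t0; rewrite /traj_x RintegralB //.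
- rewrite RintegralZl //; last first.
    by apply: (@int_comp cos _ _ 1) => //; [exact: continuous_cos | exact: cos_max].
  by rewrite int_cst // mul1r addrA.
- apply: (@int_comp (fun x => m * cos x) _ _ `|m|) => //.
    by move=> x; apply: cvgM; [exact: cvg_cst | exact: continuous_cos].
  by move=> x; rewrite normrM ler_piMr // cos_max.
- exact: int_const.
Qed.

Lemma trajy_eq (m y0 : R) psi t : measurable_fun setT psi -> 0 <= t ->
  traj_y m y0 psi t = y0 + m * \int[leb]_(s in `[0, t]) sin (psi s).
Proof.
move=> mpsi t0; rewrite /traj_y RintegralZl //.
by apply: (@int_comp sin _ _ 1) => //; [exact: continuous_sin | exact: sin_max].
Qed.


Lemma alg1 (mu s w a b T : R) : mu ^+ 2 + s ^+ 2 = 1 -> 0 <= mu -> 0 <= s -> 0 <= w -> 0 <= T ->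
  a ^+ 2 + b ^+ 2 <= T ^+ 2 ->
  (T + mu * w + mu * a - T) ^+ 2 + (s * w + mu * b) ^+ 2 <=
  (T + mu * w + mu * (mu * T) - T) ^+ 2 + (s * w + mu * (s * T)) ^+ 2.
Proof.
move=> hq m0 s0 w0 T0 hab.
have h1 : mu * a + s * b <= T.
  have h2 : (mu * a + s * b) ^+ 2 <= T ^+ 2.
    have := sqr_ge0 (mu * b - s * a). nra.
  nra.
have p1 : 0 <= mu * w * (T - (mu * a + s * b)) by rewrite !mulr_ge0 // subr_ge0.
have p2 : 0 <= mu ^+ 2 * (T ^+ 2 - (a ^+ 2 + b ^+ 2)) by rewrite mulr_ge0 ?sqr_ge0 // subr_ge0.
rewrite -subr_ge0.
have -> : (T + mu * w + mu * (mu * T) - T) ^+ 2 + (s * w + mu * (s * T)) ^+ 2 -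
  ((T + mu * w + mu * a - T) ^+ 2 + (s * w + mu * b) ^+ 2) =
  2 * (mu * w * ((mu ^+ 2 + s ^+ 2) * T - (mu * a + s * b))) +
  mu ^+ 2 * ((mu ^+ 2 + s ^+ 2) * T ^+ 2 - (a ^+ 2 + b ^+ 2)) by ring.
rewrite hq !mul1r; nra.
Qed.

Lemma alg1b (mu s x0 y0 a b : R) : a ^+ 2 + b ^+ 2 <= 0 ^+ 2 ->
  (x0 + mu * a - 0) ^+ 2 + (y0 + mu * b) ^+ 2 <=
  (x0 + mu * (mu * 0) - 0) ^+ 2 + (y0 + mu * (s * 0)) ^+ 2.
Proof.
move=> h.
have ha : a = 0 by apply/eqP; rewrite -sqrf_eq0 eq_le sqr_ge0 andbT; nra.
have hb : b = 0 by apply/eqP; rewrite -sqrf_eq0 eq_le sqr_ge0 andbT; nra.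
by rewrite ha hb !mulr0.
Qed.

Lemma alg2 (mu s w T t : R) : mu ^+ 2 + s ^+ 2 = 1 -> 0 <= t -> 0 <= T ->
  (T + mu * w + mu * (mu * T) - T) ^+ 2 + (s * w + mu * (s * T)) ^+ 2 <=
  (T + mu * w + mu * (mu * t) - t) ^+ 2 + (s * w + mu * (s * t)) ^+ 2.
Proof.
move=> hq t0 T0.
have hm : mu ^+ 2 = 1 - s ^+ 2 by rewrite -hq; ring.
have e : forall u, mu * (mu * u) - u = - (s ^+ 2 * u).
  by move=> u; rewrite mulrA -expr2 hm; ring.
rewrite -!addrA !e.
rewrite -subr_ge0.
have -> : (T + (mu * w + - (s ^+ 2 * t))) ^+ 2 + (s * w + mu * (s * t)) ^+ 2 -
  ((T + (mu * w + - (s ^+ 2 * T))) ^+ 2 + (s * w + mu * (s * T)) ^+ 2) =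
  s ^+ 2 * ((t - T) * ((mu ^+ 2 + s ^+ 2) * (t + T) - 2 * T)) by ring.
rewrite hq mul1r.
have -> : (t - T) * (t + T - 2 * T) = (t - T) ^+ 2 by ring.
by rewrite mulr_ge0 ?sqr_ge0.
Qed.

Lemma alg2b (mu s w x0 y0 t : R) : mu ^+ 2 + s ^+ 2 = 1 -> 0 <= t -> 0 <= mu -> 0 <= s ->
  y0 = s * w -> x0 - mu * w < 0 ->
  (x0 + mu * (mu * 0) - 0) ^+ 2 + (y0 + mu * (s * 0)) ^+ 2 <=
  (x0 + mu * (mu * t) - t) ^+ 2 + (y0 + mu * (s * t)) ^+ 2.
Proof.
move=> hq t0 m0 s0 hy hx.
have hm : mu ^+ 2 = 1 - s ^+ 2 by rewrite -hq; ring.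
have e : forall u, mu * (mu * u) - u = - (s ^+ 2 * u).
  by move=> u; rewrite mulrA -expr2 hm; ring.
rewrite -!addrA !e hy.
rewrite -subr_ge0.
have -> : (x0 + - (s ^+ 2 * t)) ^+ 2 + (s * w + mu * (s * t)) ^+ 2 -
  ((x0 + - (s ^+ 2 * 0)) ^+ 2 + (s * w + mu * (s * 0)) ^+ 2) =
  t * (s ^+ 2 * (mu ^+ 2 + s ^+ 2) * t + 2 * s ^+ 2 * (mu * w - x0)) by ring.
rewrite hq mulr1; apply: mulr_ge0 => //; apply: addr_ge0.
  by rewrite mulr_ge0 ?sqr_ge0.
by rewrite !mulr_ge0 ?sqr_ge0 // subr_ge0 ltW // -subr_lt0.
Qed.
End S.

Theorem theorem3 (R : realType) (mu x0 y0 : R)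
  (hmu0 : 0 < mu) (hmu1 : mu < 1) (hy0 : 0 <= y0)
  (hfeas : admissible mu x0 y0 (psi_NE mu) (T_NE mu x0 y0)) :
  is_equilibrium mu x0 y0 (psi_NE mu) (T_NE mu x0 y0).
Proof.
have mu11 : -1 <= mu <= 1 by apply/andP; split; lra.
set s := Num.sqrt (1 - mu ^+ 2).
have s0 : 0 < s by rewrite sqrtr_gt0; nra.
have hs2 : s ^+ 2 = 1 - mu ^+ 2 by rewrite sqr_sqrtr //; nra.
have hq : mu ^+ 2 + s ^+ 2 = 1 by rewrite hs2; ring.
have cNE : cos (acos mu) = mu by apply: acosK; rewrite in_itv /=.
have sNE : sin (acos mu) = s by rewrite sin_acos.
have mNE : measurable_fun setT (psi_NE mu) by exact: measurable_cst.
have NEx t : 0 <= t -> traj_x mu x0 (psi_NE mu) t = x0 + mu * (mu * t) - t.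
  by move=> t0; rewrite trajx_eq // /psi_NE /= cNE int_cst.
have NEy t : 0 <= t -> traj_y mu y0 (psi_NE mu) t = y0 + mu * (s * t).
  by move=> t0; rewrite trajy_eq // /psi_NE /= sNE int_cst.
set w := y0 / s.
have hy : y0 = s * w by rewrite /w mulrC divfK // gt_eqF.
have hk : mu / s * y0 = mu * w by rewrite /w mulrAC mulrA.
have w0 : 0 <= w by rewrite /w divr_ge0 // ltW.
have T0 : 0 <= T_NE mu x0 y0 by rewrite /T_NE le_max lexx orbT.
have Tdef : T_NE mu x0 y0 = Num.max (x0 - mu * w) 0 by rewrite /T_NE hk.
split; first exact: hfeas.
split.
- move=> psi' [_ [mpsi' _]]; rewrite /dist_at; apply: ler_wsqrtr.
  rewrite (@trajx_eq _ _ _ _ _ mpsi' T0) (@trajy_eq _ _ _ _ _ mpsi' T0) (NEx _ T0) (NEy _ T0).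
  have K := @key _ _ _ mpsi' T0.
  move: K; set a := \int[_]_(_ in _) _; set b := \int[_]_(_ in _) _ => K.
  move: K; rewrite Tdef.
  have [h|h] := leP 0 (x0 - mu * w).
  + set T := x0 - mu * w in h *; move=> K.
    have hx : x0 = T + mu * w by rewrite /T; ring.
    rewrite hx hy; apply: alg1 => //; [exact: ltW | exact: ltW].
  + move=> K; exact: alg1b.
- move=> T' [T'0 _]; rewrite /dist_at; apply: ler_wsqrtr.
  rewrite (NEx _ T0) (NEy _ T0) (NEx _ T'0) (NEy _ T'0) Tdef.
  have [h|h] := leP 0 (x0 - mu * w).
  + set T := x0 - mu * w in h *.
    have hx : x0 = T + mu * w by rewrite /T; ring.
    rewrite hx hy; exact: alg2.
  + apply: (@alg2b _ mu s w x0 y0 T' hq T'0); [exact: ltW | exact: ltW | exact: hy | exact: h].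
Qed.
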